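(* For every $n \geq 1$, the map $\psi$ restricts to a bijection from $\mathcal{S}^{(2)}_n$, the set of skeletons of 2-connected planar linear normal $\lambda$-terms with $n$ atoms, onto $\mathcal{V}^+_{n-1}$, the set of v-trees with $n-1$ edges having no label equal to $0$.
   Context: $\lambda$-terms, linear (closed, each abstraction binds exactly one atom), normal (no sub-term $(\lambda x.u)\,v$) and planar terms are standard; the skeleton is the plane unary-binary tree (atom $\mapsto$ leaf, application $u\,v \mapsto$ binary node with left subtree from $u$ and right from $v$, abstraction $\mapsto$ unary node). The diagram replaces each leaf by an edge from its parent to the binding unary node, drawn counter-clockwise and entering from the right; planar means this can be done without crossings; the term is 2-connected if the diagram is 2-edge-connected. For a unary-binary tree $S$ and node $u$, $S_u$ is the subtree at $u$; $\operatorname{leaf}, \operatorname{unary}$ count leaves and unary nodes. The map $\psi$: for a skeleton $S$ of a planar linear normal term, let $T$ be the plane tree whose nodes are a new root $r$ and the binary nodes of $S$. For a node $u$ of $T$, let $R(u)$ be the right subtree of $u$ in $S$ if $u$ is binary, and $R(r)=S$. The children of $u$ in $T$, left to right, are $x_1,\ldots,x_m$ where $x_1$ is the first binary node of $R(u)$ reached from its root through a (possibly empty) chain of unary nodes, and $x_{i+1}$ is the left child of $x_i$ in $S$ as long as it is binary. Label each binary node $u$ by $\operatorname{leaf}(S_v)-\operatorname{unary}(S_v)$ with $v$ its right child, and $r$ by $\operatorname{leaf}(S_w)-\operatorname{unary}(S_w)$ with $w$ the first non-unary node of $S$. Set $\psi(S)=(T,\ell)$. A v-tree is a plane tree with integer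 node labels $\ell$ such that: (i) leaves have label $0$ or $1$; (ii) every non-root node $u$ with children $v_1,\ldots,v_k$ satisfies $0 \le \ell(u) \le 1+\sum_i \ell(v_i)$; (iii) the root $r$ with children $v_1,\ldots,v_k$ satisfies $\ell(r) = 1+\sum_i \ell(v_i)$. Size = number of edges. *)

(* Defs.v *)
From mathcomp Require Import all_boot all_order all_algebra.

Set Implicit Arguments.
Unset Strict Implicit.
Unset Printing Implicit Defensive.

Import GRing.Theory Num.Theory.

(* Lambda terms, in de Bruijn notation: Var i refers to the (i+1)-th   *)
(* enclosing abstraction.  An "atom" is an occurrence of a variable.   *)
Inductive term : Type :=
| Var of nat
| Lam of term
| App of term & term.

(* free variable occurrences, from left to right, as de Bruijn indices
   relative to the outside of the term *)
Fixpoint fv_seq (t : term) : seq nat :=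
  match t with
  | Var i => [:: i]
  | Lam b => [seq i.-1 | i <- fv_seq b & i != 0]
  | App u v => fv_seq u ++ fv_seq v
  end.

Fixpoint all_lams (P : term -> bool) (t : term) : bool :=
  match t with
  | Var _ => true
  | Lam b => P b && all_lams P b
  | App u v => all_lams P u && all_lams P v
  end.

Fixpoint atoms (t : term) : nat :=
  match t with
  | Var _ => 1
  | Lam b => atoms b
  | App u v => atoms u + atoms v
  end.

Definition closed_term (t : term) : bool := fv_seq t == [::].

Definition linear_term (t : term) : bool :=
  closed_term t && all_lams (fun b => count_mem 0 (fv_seq b) == 1) t.

Fixpoint normal (t : term) : bool :=
  match t with
  | Var _ => true
  | Lam b => normal b
  | App u v => (if u is Lam _ then false else true) && normal u && normal v
  end.

(* Planarity: the diagram (each leaf replaced by an edge from its parent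
   to its binder, drawn counterclockwise around the tree and entering the
   binder from the right) has no crossing.  Two such edges, from leaves
   l1 (left of) l2 to binders B1, B2, cross exactly when l2 lies in the
   scope of B1 and B2 is a strict ancestor of B1; i.e. inside the body of
   any abstraction no atom bound further out occurs to the right of the
   atom bound by that abstraction.  Equivalently: the atom bound by each
   abstraction is the last free atom of its body. *)
Definition planar (t : term) : bool :=
  all_lams (fun b => last 1 (fv_seq b) == 0) t.

Inductive ubtree : Type :=
| Leaf
| Unary of ubtree
| Binary of ubtree & ubtree.

Fixpoint skeleton (t : term) : ubtree :=
  match t with
  | Var _ => Leaf
  | Lam b => Unary (skeleton b)
  | App u v => Binary (skeleton u) (skeleton v)
  end.

Fixpoint leafc (S : ubtree) : nat :=
  match S with
  | Leaf => 1
  | Unary S' => leafc S'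
  | Binary l r => leafc l + leafc r
  end.

Fixpoint unaryc (S : ubtree) : nat :=
  match S with
  | Leaf => 0
  | Unary S' => (unaryc S').+1
  | Binary l r => unaryc l + unaryc r
  end.

(* The diagram of a term, as a multigraph.  Nodes of the skeleton are   *)
(* addressed by (reversed) paths from the root: 0 = left/unique child,  *)
(* 1 = right child.  Vertices: the non-leaf nodes.  Edges: the skeleton *)
(* edges between non-leaf nodes, plus, for each leaf, an edge from its  *)
(* parent to the abstraction binding it.                                *)
Definition addr := seq nat.

Definition child_edge (c : term) (pc p : addr) (stk : seq addr)
  : seq (addr * addr) :=
  match c with
  | Var i => [:: (p, nth [::] stk i)]
  | _ => [:: (p, pc)]
  end.

(* stk: addresses of the enclosing abstractions, innermost first *)
Fixpoint dedges (t : term) (p : addr) (stk : seq addr) : seq (addr * addr) :=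
  match t with
  | Var _ => [::]
  | Lam b => child_edge b (0 :: p) p (p :: stk) ++ dedges b (0 :: p) (p :: stk)
  | App u v => child_edge u (0 :: p) p stk ++ child_edge v (1 :: p) p stk
               ++ dedges u (0 :: p) stk ++ dedges v (1 :: p) stk
  end.

Fixpoint dverts (t : term) (p : addr) : seq addr :=
  match t with
  | Var _ => [::]
  | Lam b => p :: dverts b (0 :: p)
  | App u v => p :: (dverts u (0 :: p) ++ dverts v (1 :: p))
  end.

Inductive linked (E : seq (addr * addr)) : addr -> addr -> Prop :=
| linked_refl x : linked E x x
| linked_step x y z (e : addr * addr) :
    e \in E -> ((e.1 == x) && (e.2 == y)) || ((e.2 == x) && (e.1 == y)) ->
    linked E y z -> linked E x z.

Definition two_edge_connected (V : seq addr) (E : seq (addr * addr)) : Prop :=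
  (forall x y, x \in V -> y \in V -> linked E x y) /\
  (forall i, i < size E ->
     forall x y, x \in V -> y \in V -> linked (take i E ++ drop i.+1 E) x y).

Definition two_connected (t : term) : Prop :=
  two_edge_connected (dverts t [::]) (dedges t [::] [::]).

Definition S2 (n : nat) (S : ubtree) : Prop :=
  exists t : term, linear_term t /\ normal t /\ planar t /\ two_connected t /\
                   atoms t = n /\ skeleton t = S.

Inductive ltree : Type := LNode of int & seq ltree.

Definition label (T : ltree) : int := let: LNode l _ := T in l.
Definition kids (T : ltree) : seq ltree := let: LNode _ cs := T in cs.

Fixpoint lnodes (T : ltree) : nat :=
  let: LNode _ cs := T in (sumn (map lnodes cs)).+1.

Definition lsize (T : ltree) : nat := (lnodes T).-1.

Definition sum_labels (cs : seq ltree) : int := \sum_(c <- cs) label c.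

Definition leaf_ok (T : ltree) : bool :=
  let: LNode l cs := T in (nilp cs) ==> ((l == 0) || (l == 1))%R.

Fixpoint nonroot_ok (T : ltree) : bool :=
  let: LNode l cs := T in
  [&& leaf_ok T, (0 <= l)%R, (l <= 1 + sum_labels cs)%R & all nonroot_ok cs].

Definition vtree (T : ltree) : bool :=
  let: LNode l cs := T in
  [&& leaf_ok T, (l == 1 + sum_labels cs)%R & all nonroot_ok cs].

Fixpoint all_labels (P : int -> bool) (T : ltree) : bool :=
  let: LNode l cs := T in P l && all (all_labels P) cs.

Definition Vplus (m : nat) (T : ltree) : Prop :=
  [/\ vtree T, lsize T = m & all_labels (fun l => l != 0%R) T].

Definition lu (S : ubtree) : int := (leafc S)%:Z - (unaryc S)%:Z.

(* children (in T) of a node u with R(u) = R: descend R through unary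
   nodes to the first binary node x1, then follow left children
   x2, x3, ... as long as they are binary; a binary node x with right
   child r gets label leaf(r) - unary(r) and R(x) = r. *)
Fixpoint psi_kids (R : ubtree) : seq ltree :=
  match R with
  | Leaf => [::]
  | Unary R' => psi_kids R'
  | Binary l r =>
      LNode (lu r) (psi_kids r) :: (if l is Binary _ _ then psi_kids l else [::])
  end.

Fixpoint strip_unary (S : ubtree) : ubtree :=
  if S is Unary S' then strip_unary S' else S.

Definition psi (S : ubtree) : ltree := LNode (lu (strip_unary S)) (psi_kids S).

(* Main.v *)
Require Import Defs.
From mathcomp Require Import all_boot all_order all_algebra.
From mathcomp Require Import zify.

Set Implicit Arguments.
Unset Strict Implicit.
Unset Printing Implicit Defensive.


Lemma linked_trans E x y z : linked E x y -> linked E y z -> linked E x z.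
Proof.
elim=> [//|x1 y1 z1 e He Hxy _ IH] Hz; exact: (linked_step He Hxy (IH Hz)).
Qed.

Lemma linked_sym E x y : linked E x y -> linked E y x.
Proof.
elim=> [x1|x1 y1 z1 e He Hxy _ IH]; first exact: linked_refl.
apply: (linked_trans IH); apply: (linked_step He _ (linked_refl _ _)).
by case/orP: Hxy => /andP [-> ->]; rewrite ?orbT.
Qed.

Lemma linked_mono E F x y : {subset E <= F} -> linked E x y -> linked F x y.
Proof.
move=> sub; elim=> [x1|x1 y1 z1 e He Hxy _ IH]; first exact: linked_refl.
exact: (linked_step (sub _ He) Hxy IH).
Qed.

Lemma linked_edge E x y z : (x, y) \in E \/ (y, x) \in E -> linked E y z -> linked E x z.
Proof.
case=> H; apply: (linked_step H) => /=; by rewrite !eqxx ?orbT.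
Qed.

Lemma linked_bal (P : addr -> bool) E x y : linked E x y ->
  count (fun e : addr * addr => P e.1 != P e.2) E = 0 -> P x = P y.
Proof.
elim=> [//|x1 y1 z1 e He Hxy _ IH] H0.
rewrite -(IH H0).
have : ~~ has (fun e : addr * addr => P e.1 != P e.2) E by rewrite has_count H0.
move=> /hasPn /(_ e He); rewrite negbK => /eqP.
by case/orP: Hxy => /andP [/eqP <- /eqP <-].
Qed.

Fixpoint subs2 (t : term) (p : addr) (stk : seq addr) : seq (addr * term * seq addr) :=
  (p, t, stk) :: match t with
                 | Var _ => [::]
                 | Lam b => subs2 b (0 :: p) (p :: stk)
                 | App u v => subs2 u (0 :: p) stk ++ subs2 v (1 :: p) stk
                 end.

Definition isVar (t : term) : bool := if t is Var _ then true else false.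

Lemma sfx_size (T : eqType) (s1 s2 : seq T) : suffix s1 s2 -> size s1 <= size s2.
Proof. by move/suffixP=> [q ->]; rewrite size_cat leq_addl. Qed.

Lemma sfx_uniq (T : eqType) (s1 s2 x : seq T) : suffix s1 x -> suffix s2 x -> size s1 = size s2 -> s1 = s2.
Proof. by move=> H1 H2 Hs; move: H1 H2; rewrite !suffixE Hs => /eqP <- /eqP ->. Qed.

Lemma subs2_addr t p stk a c s : List.In (a, c, s) (subs2 t p stk) ->
  (a = p /\ c = t /\ s = stk) \/ (exists d, suffix (d :: p) a).
Proof.
elim: t p stk => [i|b IH|u IHu v IHv] p stk /=.
- by case=> [[-> -> ->]|[]]; left.
- case=> [[-> -> ->]|]; first by left.
  move=> H; case: (IH _ _ H) => [[-> _]|[d Hd]]; right; first by exists 0; exact: suffix_refl.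
  exists 0; exact: (suffix_trans (suffix_cons _ _) Hd).
- case=> [[-> -> ->]|]; first by left.
  move=> H0; case: (List.in_app_or _ _ _ H0) => H.
  + case: (IHu _ _ H) => [[-> _]|[d Hd]]; right; first by exists 0; exact: suffix_refl.
    exists 0; exact: (suffix_trans (suffix_cons _ _) Hd).
  + case: (IHv _ _ H) => [[-> _]|[d Hd]]; right; first by exists 1; exact: suffix_refl.
    exists 1; exact: (suffix_trans (suffix_cons _ _) Hd).
Qed.

Lemma subs2_suffix t p stk a c s : List.In (a, c, s) (subs2 t p stk) -> suffix p a.
Proof.
move/subs2_addr=> [[-> _]|[d Hd]]; first exact: suffix_refl.
exact: (suffix_trans (suffix_cons _ _) Hd).
Qed.

Lemma subs2_head t p stk a c s : List.In (a, c, s) (subs2 t p stk) -> size a <= size p ->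
  a = p /\ c = t /\ s = stk.
Proof.
move/subs2_addr=> [//|[d /sfx_size /= Hd]] H; exfalso; lia.
Qed.


Definition unb (pc : addr) (E : seq (addr * addr)) :=
  count (fun e : addr * addr => suffix pc e.1 != suffix pc e.2) E.

Lemma count_lam (f : nat -> bool) (s : seq nat) :
  count f [seq i.-1 | i <- s & i != 0] = count (fun i => (i != 0) && f i.-1) s.
Proof. by elim: s => [//|i s IH] /=; case: i => [|i] /=; rewrite IH. Qed.

Lemma unb_in pc c p d stk : suffix pc p ->
  unb pc (child_edge c (d :: p) p stk ++ dedges c (d :: p) stk) =
  count (fun i => ~~ suffix pc (nth [::] stk i)) (fv_seq c).
Proof.
elim: c p d stk => [i|b IH|u IHu v IHv] p d stk Hp.
- by rewrite /unb /= Hp addn0.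
- have Hdp : suffix pc (d :: p) := suffix_trans Hp (suffix_cons _ _).
  rewrite /unb /= Hp Hdp /= add0n.
  have := IH (d :: p) 0 ((d :: p) :: stk) Hdp; rewrite /unb => ->.
  rewrite count_lam; apply: eq_count => -[|i] //=.
  by rewrite Hdp.
- have Hdp : suffix pc (d :: p) := suffix_trans Hp (suffix_cons _ _).
  have Hu := IHu (d :: p) 0 stk Hdp; have Hv := IHv (d :: p) 1 stk Hdp.
  rewrite /unb !count_cat in Hu Hv.
  rewrite /unb /= Hp Hdp /= add0n !count_cat.
  by rewrite -Hu -Hv addnACA addnA.
Qed.

Lemma unb_dedges pc c a stk : ~~ isVar c -> suffix pc a ->
  unb pc (dedges c a stk) = count (fun i => ~~ suffix pc (nth [::] stk i)) (fv_seq c).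
Proof.
case: c => [//|b|u v] _ Ha /=.
- rewrite (unb_in _ _ _ Ha) count_lam; apply: eq_count => -[|i] //=.
  by rewrite Ha.
- have Hu := unb_in u 0 stk Ha; have Hv := unb_in v 1 stk Ha.
  rewrite /unb !count_cat in Hu Hv *.
  by rewrite -Hu -Hv addnACA addnA.
Qed.

Lemma nth_notP pc (stk : seq addr) x : (forall i, ~~ suffix pc (nth [::] stk i)) ->
  ~~ suffix pc x -> forall i, ~~ suffix pc (nth [::] (x :: stk) i).
Proof. by move=> H Hx [|i] /=; [exact: Hx|exact: H]. Qed.

Lemma unb_zero pc c p d stk : (forall i, ~~ suffix pc (nth [::] stk i)) -> ~~ suffix pc p ->
  (forall a c' s', List.In (a, c', s') (subs2 c (d :: p) stk) -> ~~ suffix pc a) ->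
  unb pc (child_edge c (d :: p) p stk ++ dedges c (d :: p) stk) = 0.
Proof.
elim: c p d stk => [i|b IH|u IHu v IHv] p d stk Hs Hp Hsub.
- by rewrite /unb /= (negbTE Hp) (negbTE (Hs i)).
- have Hdp := Hsub _ _ _ (List.in_eq _ _).
  rewrite /unb /= (negbTE Hp) (negbTE Hdp) /= add0n.
  apply: IH => //; first exact: nth_notP.
  by move=> a c' s' H; apply: (Hsub a c' s'); right.
- have Hdp := Hsub _ _ _ (List.in_eq _ _).
  have Hu : unb pc (child_edge u (0 :: d :: p) (d :: p) stk ++ dedges u (0 :: d :: p) stk) = 0.
    apply: IHu => // a c' s' H; apply: (Hsub a c' s'); right; apply: List.in_or_app; left; exact: H.
  have Hv : unb pc (child_edge v (1 :: d :: p) (d :: p) stk ++ dedges v (1 :: d :: p) stk) = 0.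
    apply: IHv => // a c' s' H; apply: (Hsub a c' s'); right; apply: List.in_or_app; right; exact: H.
  rewrite /unb !count_cat in Hu Hv.
  rewrite /unb /= (negbTE Hp) (negbTE Hdp) /= add0n !count_cat.
  move/eqP: Hu; move/eqP: Hv; rewrite !addn_eq0 => /andP[/eqP -> /eqP ->] /andP[/eqP -> /eqP ->].
  by [].
Qed.

Lemma all_true_count pc (stk : seq addr) (s : seq nat) :
  (forall i, ~~ suffix pc (nth [::] stk i)) ->
  count (fun i => ~~ suffix pc (nth [::] stk i)) s = size s.
Proof. by move=> H; rewrite -count_predT; apply: eq_count => i; rewrite H. Qed.

Lemma unb_out pc c0 s0 t p d stk : (forall i, ~~ suffix pc (nth [::] stk i)) -> ~~ suffix pc p ->
  List.In (pc, c0, s0) (subs2 t (d :: p) stk) -> ~~ isVar c0 ->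
  unb pc (child_edge t (d :: p) p stk ++ dedges t (d :: p) stk) = 1 + size (fv_seq c0).
Proof.
elim: t p d stk => [i|b IH|u IHu v IHv] p d stk Hs Hp Hin Hc0.
- by case: Hin => [[_ E _]|[]]; rewrite -E in Hc0.
- have [Heq|Hne] := eqVneq (d :: p) pc.
  + have [_ [Ec Es]] := subs2_head Hin (eq_leq (congr1 size (esym Heq))).
    subst c0 s0.
    have -> : unb pc (child_edge (Lam b) (d :: p) p stk ++ dedges (Lam b) (d :: p) stk) =
      1 + unb pc (dedges (Lam b) (d :: p) stk) by rewrite /unb count_cat /= (negbTE Hp) Heq suffix_refl.
    by rewrite Heq (unb_dedges stk Hc0 (suffix_refl _)) all_true_count.
  + have Hdp : ~~ suffix pc (d :: p).
      apply/negP => H1; move/eqP: Hne; apply.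
      apply: (sfx_uniq (subs2_suffix Hin) (suffix_refl pc)).
      by apply/eqP; rewrite eqn_leq (sfx_size H1) (sfx_size (subs2_suffix Hin)).
    case: Hin => [[E1 _ _]|Hin]; first by rewrite E1 eqxx in Hne.
    rewrite /unb /= (negbTE Hp) (negbTE Hdp) /= add0n.
    apply: IH => //; exact: nth_notP.
- have [Heq|Hne] := eqVneq (d :: p) pc.
  + have [_ [Ec Es]] := subs2_head Hin (eq_leq (congr1 size (esym Heq))).
    subst c0 s0.
    have -> : unb pc (child_edge (App u v) (d :: p) p stk ++ dedges (App u v) (d :: p) stk) =
      1 + unb pc (dedges (App u v) (d :: p) stk) by rewrite /unb count_cat /= (negbTE Hp) Heq suffix_refl.
    by rewrite Heq (unb_dedges stk Hc0 (suffix_refl _)) all_true_count.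
  + have Hdp : ~~ suffix pc (d :: p).
      apply/negP => H1; move/eqP: Hne; apply.
      apply: (sfx_uniq (subs2_suffix Hin) (suffix_refl pc)).
      by apply/eqP; rewrite eqn_leq (sfx_size H1) (sfx_size (subs2_suffix Hin)).
    case: Hin => [[E1 _ _]|Hin]; first by rewrite E1 eqxx in Hne.
    rewrite /unb /= (negbTE Hp) (negbTE Hdp) /= add0n !count_cat.
    case: (List.in_app_or _ _ _ Hin) => H.
    * have Hu := IHu (d :: p) 0 stk Hs Hdp H Hc0.
      have Hv : unb pc (child_edge v (1 :: d :: p) (d :: p) stk ++ dedges v (1 :: d :: p) stk) = 0.
        apply: unb_zero => // a c' s' Ha; apply/negP => Hpa.
        have H0 := subs2_suffix H; have H1 := subs2_suffix Ha.
        by have := sfx_uniq (suffix_trans H0 Hpa) H1 erefl.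
      rewrite /unb !count_cat in Hu Hv.
        move/eqP: Hv; rewrite addn_eq0 => /andP[/eqP -> /eqP ->]; by rewrite add0n addn0.
    * have Hv := IHv (d :: p) 1 stk Hs Hdp H Hc0.
      have Hu : unb pc (child_edge u (0 :: d :: p) (d :: p) stk ++ dedges u (0 :: d :: p) stk) = 0.
        apply: unb_zero => // a c' s' Ha; apply/negP => Hpa.
        have H0 := subs2_suffix H; have H1 := subs2_suffix Ha.
        by have := sfx_uniq (suffix_trans H0 Hpa) H1 erefl.
      rewrite /unb !count_cat in Hu Hv.
        move/eqP: Hu; rewrite addn_eq0 => /andP[/eqP -> /eqP ->]; by rewrite !add0n.
Qed.


Lemma subs2_vert t p stk a c s : List.In (a, c, s) (subs2 t p stk) -> ~~ isVar c ->
  a \in dverts t p.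
Proof.
elim: t p stk => [i|b IH|u IHu v IHv] p stk /=.
- by case=> [[_ <- _]|[]].
- case=> [[-> _ _]|H] Hc; first by rewrite inE eqxx.
  by rewrite inE (IH _ _ H Hc) orbT.
- case=> [[-> _ _]|H] Hc; first by rewrite inE eqxx.
  case: (List.in_app_or _ _ _ H) => H1; rewrite inE mem_cat.
  + by rewrite (IHu _ _ H1 Hc) orbT.
  + by rewrite (IHv _ _ H1 Hc) !orbT.
Qed.

Lemma vert_subs2 t p stk a : a \in dverts t p ->
  exists c s, List.In (a, c, s) (subs2 t p stk) /\ ~~ isVar c.
Proof.
elim: t p stk => [i|b IH|u IHu v IHv] p stk //=.
- rewrite inE => /orP [/eqP ->|H]; first by exists (Lam b), stk; split; [left|].
  have [c [s [H1 H2]]] := IH _ (p :: stk) H; exists c, s; split => //; right; exact: H1.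
- rewrite inE mem_cat => /orP [/eqP ->|/orP [H|H]]; first by exists (App u v), stk; split; [left|].
  + have [c [s [H1 H2]]] := IHu _ stk H; exists c, s; split => //; right.
    by apply: List.in_or_app; left; exact: H1.
  + have [c [s [H1 H2]]] := IHv _ stk H; exists c, s; split => //; right.
    by apply: List.in_or_app; right; exact: H1.
Qed.

Lemma unb_root pc c0 s0 t : pc != [::] -> List.In (pc, c0, s0) (subs2 t [::] [::]) ->
  ~~ isVar c0 -> unb pc (dedges t [::] [::]) = 1 + size (fv_seq c0).
Proof.
move=> Hpc Hin Hc0.
have Hnil : ~~ suffix pc [::] by rewrite suffixs0.
case: t Hin => [i|b|u v] /= Hin.
- by case: Hin => [[E _ _]|[]]; rewrite E eqxx in Hpc.
- case: Hin => [[E _ _]|Hin]; first by rewrite E eqxx in Hpc.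
  apply: unb_out Hin Hc0 => //.
  by case=> [|[|i]].
- case: Hin => [[E _ _]|Hin]; first by rewrite E eqxx in Hpc.
  have Hs : forall i, ~~ suffix pc (nth [::] ([::] : seq addr) i) by move=> i; rewrite nth_nil.
  rewrite /unb !count_cat.
  case: (List.in_app_or _ _ _ Hin) => H.
  + have Hu := unb_out Hs Hnil H Hc0.
    have Hv : unb pc (child_edge v [:: 1] [::] [::] ++ dedges v [:: 1] [::]) = 0.
      apply: unb_zero => // a c' s' Ha; apply/negP => Hpa.
      have H0 := subs2_suffix H; have H1 := subs2_suffix Ha.
      by have := sfx_uniq (suffix_trans H0 Hpa) H1 erefl.
    rewrite /unb !count_cat in Hu Hv.
    move/eqP: Hv; rewrite addn_eq0 => /andP[/eqP -> /eqP ->]; by rewrite add0n addn0.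
  + have Hv := unb_out Hs Hnil H Hc0.
    have Hu : unb pc (child_edge u [:: 0] [::] [::] ++ dedges u [:: 0] [::]) = 0.
      apply: unb_zero => // a c' s' Ha; apply/negP => Hpa.
      have H0 := subs2_suffix H; have H1 := subs2_suffix Ha.
      by have := sfx_uniq (suffix_trans H0 Hpa) H1 erefl.
    rewrite /unb !count_cat in Hu Hv.
    move/eqP: Hu; rewrite addn_eq0 => /andP[/eqP -> /eqP ->]; by rewrite !add0n.
Qed.

Lemma count_rm (T : Type) (f : pred T) (s : seq T) x0 i : i < size s ->
  count f (take i s ++ drop i.+1 s) + f (nth x0 s i) = count f s.
Proof.
move=> Hi; rewrite -[in RHS](cat_take_drop i s) (drop_nth x0 Hi) !count_cat /=.
by rewrite -addnA [f _ + _]addnC.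
Qed.

Lemma tc_fv t : two_connected t -> forall a c s, List.In (a, c, s) (subs2 t [::] [::]) ->
  a != [::] -> fv_seq c != [::].
Proof.
move=> [_ Htc] a c s Hin Ha.
case Hc: (isVar c); first by case: c Hc Hin.
apply/negP => /eqP Hfv.
have Hu := unb_root Ha Hin (negbT Hc); rewrite Hfv /= in Hu.
set E := dedges t [::] [::] in Hu.
set f := (fun e : addr * addr => suffix a e.1 != suffix a e.2).
have Hhas : has f E by rewrite has_count; rewrite /unb in Hu; rewrite Hu.
set i := find f E.
have Hi : i < size E by rewrite -has_find.
have Hrm := count_rm f ([::], [::]) Hi.
have H0 : count f (take i E ++ drop i.+1 E) = 0.
  by move: Hrm; rewrite (nth_find _ Hhas); rewrite /unb in Hu; rewrite -/f Hu addn1 => -[].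
have Hav : a \in dverts t [::] := subs2_vert Hin (negbT Hc).
have Hroot : [::] \in dverts t [::].
  by case: t {Hin Hu E f Hhas i Hi Hrm H0 Htc} Hav => [//|b|u v] _; rewrite inE eqxx.
have Hl := Htc i Hi a [::] Hav Hroot.
have := linked_bal Hl H0.
by rewrite suffix_refl suffixs0 (negbTE Ha).
Qed.


Lemma subs2_stack t p stk a c s : List.In (a, c, s) (subs2 t p stk) ->
  exists nw, [/\ s = nw ++ stk,
    (forall i, i \in fv_seq c -> i < size nw \/ (i - size nw) \in fv_seq t) &
    (forall x, x \in nw -> x \in dverts t p /\ size x < size a)].
Proof.
elim: t p stk => [i|b IH|u IHu v IHv] p stk /=.
- case=> [[<- <- <-]|[]]; exists [::]; split => // j; rewrite subn0; by right.
- case=> [[<- <- <-]|H].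
    exists [::]; split => // j; rewrite subn0; by right.
  have [nw [Es Hfv Hnw]] := IH _ _ H.
  exists (rcons nw p); split.
  + by rewrite Es cat_rcons.
  + move=> j /Hfv [Hj|Hj]; first by left; rewrite size_rcons; lia.
    case Ej: (j - size nw) => [|k].
      by left; rewrite size_rcons; lia.
    right; apply/mapP; exists (j - size nw); first by rewrite mem_filter Ej /= -Ej Hj.
    rewrite size_rcons; lia.
  + move=> x; rewrite mem_rcons inE => /orP [/eqP ->|/Hnw [H1 H2]].
      split; first by rewrite inE eqxx.
      by have := sfx_size (subs2_suffix H) => /=; lia.
    by rewrite inE H1 orbT.
- case=> [[<- <- <-]|H].
    exists [::]; split => // j; rewrite subn0; by right.
  case: (List.in_app_or _ _ _ H) => H1.
  + have [nw [Es Hfv Hnw]] := IHu _ _ H1.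
    exists nw; split => //.
    * by move=> j /Hfv [Hj|Hj]; [left|right; rewrite mem_cat Hj].
    * by move=> x /Hnw [Hx1 Hx2]; rewrite inE mem_cat Hx1 orbT.
  + have [nw [Es Hfv Hnw]] := IHv _ _ H1.
    exists nw; split => //.
    * by move=> j /Hfv [Hj|Hj]; [left|right; rewrite mem_cat Hj orbT].
    * by move=> x /Hnw [Hx1 Hx2]; rewrite inE mem_cat Hx1 !orbT.
Qed.

Lemma child_edge_fst c pc p stk e : e \in child_edge c pc p stk -> e.1 = p.
Proof. by case: c => [i|b|u v]; rewrite inE => /eqP ->. Qed.

Lemma dedges_fst c a s e : e \in dedges c a s -> size a <= size e.1.
Proof.
elim: c a s => [i|b IH|u IHu v IHv] a s //=.
- rewrite mem_cat => /orP [/child_edge_fst ->//|/IH /=]; lia.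
- rewrite !mem_cat => /orP [/child_edge_fst ->//|/orP [/child_edge_fst ->//|/orP [/IHu|/IHv]]] /=; lia.
Qed.

Lemma subs2_dedges t p stk a c s : List.In (a, c, s) (subs2 t p stk) ->
  {subset dedges c a s <= dedges t p stk}.
Proof.
elim: t p stk => [i|b IH|u IHu v IHv] p stk /=.
- by case=> [[<- <- <-]|[]].
- case=> [[<- <- <-]//|H] e /(IH _ _ H) He.
  by rewrite mem_cat He orbT.
- case=> [[<- <- <-]//|H] e.
  case: (List.in_app_or _ _ _ H) => H1.
  + by move/(IHu _ _ H1) => He; rewrite !mem_cat He !orbT.
  + by move/(IHv _ _ H1) => He; rewrite !mem_cat He !orbT.
Qed.

Lemma child_edge_nv c pc p stk : ~~ isVar c -> (p, pc) \in child_edge c pc p stk.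
Proof. by case: c => [//|b|u v] _; rewrite inE. Qed.

Lemma subs2_parent t p stk a c s : List.In (a, c, s) (subs2 t p stk) -> a != p ->
  ~~ isVar c -> exists a', [/\ a' \in dverts t p, size a' < size a & (a', a) \in dedges t p stk].
Proof.
elim: t p stk => [i|b IH|u IHu v IHv] p stk /=.
- by case=> [[<- _ _]|[]]; rewrite eqxx.
- case=> [[<- _ _]|H]; first by rewrite eqxx.
  move=> Ha Hc.
  have [Ea|Na] := eqVneq a (0 :: p).
  + have [_ [Ec _]] := subs2_head H (eq_leq (congr1 size Ea)).
    subst a c; exists p; split => //; first by rewrite inE eqxx.
    by rewrite mem_cat child_edge_nv.
  + have [a' [H1 H2 H3]] := IH _ _ H Na Hc.
    by exists a'; split => //; rewrite ?inE ?mem_cat ?H1 ?H3 ?orbT.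
- case=> [[<- _ _]|H]; first by rewrite eqxx.
  move=> Ha Hc.
  case: (List.in_app_or _ _ _ H) => H0.
  + have [Ea|Na] := eqVneq a (0 :: p).
    * have [_ [Ec _]] := subs2_head H0 (eq_leq (congr1 size Ea)).
      subst a c; exists p; split => //; first by rewrite inE eqxx.
      by rewrite mem_cat child_edge_nv.
    * have [a' [H1 H2 H3]] := IHu _ _ H0 Na Hc.
      by exists a'; split => //; rewrite ?inE ?mem_cat ?H1 ?H3 ?orbT.
  + have [Ea|Na] := eqVneq a (1 :: p).
    * have [_ [Ec _]] := subs2_head H0 (eq_leq (congr1 size Ea)).
      subst a c; exists p; split => //; first by rewrite inE eqxx.
      by rewrite !mem_cat child_edge_nv ?orbT.
    * have [a' [H1 H2 H3]] := IHv _ _ H0 Na Hc.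
      by exists a'; split => //; rewrite ?inE ?mem_cat ?H1 ?H3 ?orbT.
Qed.

Lemma down c a s i F : i \in fv_seq c -> ~~ isVar c -> {subset dedges c a s <= F} ->
  linked F a (nth [::] s i).
Proof.
elim: c a s i => [k|b IH|u IHu v IHv] a s i //= Hi _ Hsub.
- have Hb : i.+1 \in fv_seq b.
    case/mapP: Hi => j; rewrite mem_filter => /andP [Hj0 Hj] ->.
    by case: j Hj0 Hj.
  case Hv: (isVar b).
  + case: b Hv Hb IH Hsub Hi => [k|//|//] _ Hb _ Hsub _.
    rewrite inE in Hb; move/eqP: Hb => Ek; subst k.
    apply: (linked_edge (y := nth [::] s i)); last exact: linked_refl.
    by left; apply: Hsub; rewrite /= inE.
  + apply: (linked_edge (y := 0 :: a)).
      by left; apply: Hsub; rewrite mem_cat child_edge_nv ?Hv.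
    have := IH (0 :: a) (a :: s) i.+1 Hb (negbT Hv).
    by apply=> e He; apply: Hsub; rewrite mem_cat He orbT.
- rewrite mem_cat in Hi; case/orP: Hi => Hi.
  + case Hv: (isVar u).
    * case: u Hv Hi IHu Hsub => [k|//|//] _ Hi _ Hsub.
      rewrite inE in Hi; move/eqP: Hi => Ei; subst i.
      apply: (linked_edge (y := nth [::] s k)); last exact: linked_refl.
      by left; apply: Hsub; rewrite /= inE eqxx.
    * apply: (linked_edge (y := 0 :: a)).
        by left; apply: Hsub; rewrite mem_cat child_edge_nv ?Hv.
      have := IHu (0 :: a) s i Hi (negbT Hv).
      by apply=> e He; apply: Hsub; rewrite !mem_cat He !orbT.
  + case Hvv: (isVar v).
    * case: v Hvv Hi IHv Hsub => [k|//|//] _ Hi _ Hsub.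
      rewrite inE in Hi; move/eqP: Hi => Ei; subst i.
      apply: (linked_edge (y := nth [::] s k)); last exact: linked_refl.
      by left; apply: Hsub; rewrite !mem_cat /= !inE eqxx !orbT.
    * apply: (linked_edge (y := 1 :: a)).
        by left; apply: Hsub; rewrite !mem_cat child_edge_nv ?Hvv ?orbT.
      have := IHv (1 :: a) s i Hi (negbT Hvv).
      by apply=> e He; apply: Hsub; rewrite !mem_cat He !orbT.
Qed.

Lemma conn_root t (F : seq (addr * addr)) e0 : fv_seq t = [::] ->
  (forall a c s, List.In (a, c, s) (subs2 t [::] [::]) -> a != [::] -> fv_seq c != [::]) ->
  (forall e, e \in dedges t [::] [::] -> e != e0 -> e \in F) ->
  forall a, a \in dverts t [::] -> linked F a [::].
Proof.
move=> Hcl HF HE.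
suff : forall n a, size a <= n -> a \in dverts t [::] -> linked F a [::].
  by move=> H a; apply: (H (size a)).
elim=> [|n IHn] a Hsz Ha.
  by case: a Hsz {Ha} => [_|//]; exact: linked_refl.
have [->|Hne] := eqVneq a [::]; first exact: linked_refl.
have [c [s [Hin Hc]]] := vert_subs2 [::] Ha.
have [a' [Ha'1 Ha'2 Ha'3]] := subs2_parent Hin Hne Hc.
have [Ee0|Ne0] := eqVneq (a', a) e0.
- have := HF _ _ _ Hin Hne.
  case Hfv: (fv_seq c) => [//|i0 rest] _.
  have Hi0 : i0 \in fv_seq c by rewrite Hfv mem_head.
  have [nw [Es Hfvc Hnw]] := subs2_stack Hin.
  rewrite cats0 in Es; subst s.
  have Hlt : i0 < size nw by case: (Hfvc _ Hi0) => //; rewrite Hcl.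
  have [Hb1 Hb2] := Hnw _ (mem_nth [::] Hlt).
  apply: (linked_trans (y := nth [::] nw i0)); last by apply: IHn => //; rewrite -ltnS (leq_trans Hb2 Hsz).
  apply: (down Hi0 Hc) => e He.
  apply: HE; first exact: (subs2_dedges Hin).
  apply/eqP => Ee; move: (dedges_fst He); rewrite Ee -Ee0 /=; by rewrite leqNgt Ha'2.
- apply: (linked_edge (y := a')); first by right; apply: HE.
  by apply: IHn => //; rewrite -ltnS (leq_trans Ha'2 Hsz).
Qed.

Lemma mem_rm (T : eqType) (s : seq T) x0 i x : i < size s -> x \in s -> x != nth x0 s i ->
  x \in take i s ++ drop i.+1 s.
Proof.
move=> Hi; rewrite -{1}(cat_take_drop i s) (drop_nth x0 Hi) !mem_cat inE.
by case/orP => [->//|/orP [/eqP ->|->]]; rewrite ?eqxx ?orbT.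
Qed.

Lemma tc_of_fv t : fv_seq t = [::] ->
  (forall a c s, List.In (a, c, s) (subs2 t [::] [::]) -> a != [::] -> fv_seq c != [::]) ->
  two_connected t.
Proof.
move=> Hcl HF; split.
- move=> x y Hx Hy.
  have Hc := conn_root (e0 := ([::], [::])) Hcl HF (fun e He _ => He).
  exact: (linked_trans (Hc _ Hx) (linked_sym (Hc _ Hy))).
- move=> i Hi x y Hx Hy.
  have Hc := conn_root (e0 := nth ([::], [::]) (dedges t [::] [::]) i) Hcl HF
    (fun e He Hne => mem_rm Hi He Hne).
  exact: (linked_trans (Hc _ Hx) (linked_sym (Hc _ Hy))).
Qed.


Definition pos (S : ubtree) : bool := unaryc S < leafc S.

Fixpoint psub (S : ubtree) : bool :=
  match S with
  | Leaf => true
  | Unary S' => pos S' && psub S'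
  | Binary l r => [&& pos l, pos r, psub l & psub r]
  end.

Fixpoint nrm (S : ubtree) : bool :=
  match S with
  | Leaf => true
  | Unary S' => nrm S'
  | Binary l r => [&& (if l is Unary _ then false else true), nrm l & nrm r]
  end.

Definition good (S : ubtree) : bool := [&& leafc S == unaryc S, nrm S & psub S].

Definition linb (b : term) : bool := count_mem 0 (fv_seq b) == 1.

Lemma count_nz (s : seq nat) : count (fun i : nat => i != 0) s + count_mem 0 s = size s.
Proof.
elim: s => [//|[|i] s IH] /=; rewrite -IH.
- by rewrite add0n add1n addnS.
- by rewrite add0n add1n addSn.
Qed.

Lemma fv_size t : all_lams linb t -> size (fv_seq t) + unaryc (skeleton t) = leafc (skeleton t).
Proof.
elim: t => [i|b IH|u IHu v IHv] //=.
- move=> /andP [/eqP Hb Hall]; rewrite size_map size_filter.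
  have := count_nz (fv_seq b); rewrite Hb -(IH Hall); lia.
- move=> /andP [Hu Hv]; rewrite size_cat -(IHu Hu) -(IHv Hv); lia.
Qed.

Lemma normal_nrm t : normal t = nrm (skeleton t).
Proof.
elim: t => [i|b IH|u IHu v IHv] //=.
by rewrite IHu IHv; case: u {IHu}.
Qed.

Lemma atoms_leafc t : atoms t = leafc (skeleton t).
Proof. by elim: t => //= u -> v ->. Qed.

Lemma all_lams_sub P t p stk a c s : List.In (a, c, s) (subs2 t p stk) ->
  all_lams P t -> all_lams P c.
Proof.
elim: t p stk => [i|b IH|u IHu v IHv] p stk /=.
- by case=> [[_ <- _]|[]].
- case=> [[_ <- _]//|H] /andP [_ Hb]; exact: IH H Hb.
- case=> [[_ <- _]//|H] /andP [Hu Hv].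
  case: (List.in_app_or _ _ _ H) => H1; [exact: IHu H1 Hu|exact: IHv H1 Hv].
Qed.

Lemma pos_from c a s : (forall a' c' s', List.In (a', c', s') (subs2 c a s) -> fv_seq c' != [::]) ->
  all_lams linb c -> pos (skeleton c) && psub (skeleton c).
Proof.
elim: c a s => [i|b IH|u IHu v IHv] a s /= HF Hall.
- by [].
- have Hpos : pos (skeleton (Lam b)).
    have := HF _ _ _ (List.in_eq _ _); have := fv_size (t := Lam b) Hall.
    rewrite /pos /= => Hsz; rewrite -size_eq0 -lt0n => Hne; rewrite -Hsz.
    by rewrite -[X in X < _]add0n ltn_add2r.
  rewrite Hpos /=.
  case/andP: Hall => _ Hb.
  by apply: (IH (0 :: a) (a :: s)) => // a' c' s' H; apply: (HF a' c' s'); right.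
- have Hpos : pos (skeleton (App u v)).
    have := HF _ _ _ (List.in_eq _ _); have := fv_size (t := App u v) Hall.
    rewrite /pos /= => Hsz; rewrite -size_eq0 -lt0n => Hne; rewrite -Hsz.
    by rewrite -[X in X < _]add0n ltn_add2r.
  case/andP: Hall => Hu Hv.
  have /andP [H1 H2] : pos (skeleton u) && psub (skeleton u).
    apply: (IHu (0 :: a) s) => // a' c' s' H; apply: (HF a' c' s'); right.
    by apply: List.in_or_app; left.
  have /andP [H3 H4] : pos (skeleton v) && psub (skeleton v).
    apply: (IHv (1 :: a) s) => // a' c' s' H; apply: (HF a' c' s'); right.
    by apply: List.in_or_app; right.
  move: Hpos; rewrite /= /pos /= => ->.
  by rewrite -!/(pos _) H1 H2 H3 H4.
Qed.


Lemma S2_good n S : S2 n S -> good S /\ leafc S = n.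
Proof.
move=> [t [/andP [/eqP Hcl Hlin] [Hnorm [Hpl [Htc [Hat Hsk]]]]]].
subst S n; split; last by rewrite atoms_leafc.
have HF := tc_fv Htc.
rewrite /good -normal_nrm Hnorm /=.
apply/andP; split.
  by have := fv_size Hlin; rewrite Hcl /= add0n => ->.
case: t Hcl Hlin HF {Hnorm Hpl Htc} => [//|b|u v] Hcl Hlin HF /=.
- case/andP: Hlin => _ Hb.
  apply: (pos_from (a := [:: 0]) (s := [:: [::]])) => // a' c' s' H.
  apply: (HF a' c' s'); first by right.
  by apply/eqP => E; have := sfx_size (subs2_suffix H); rewrite E.
- case/andP: Hlin => Hu Hv.
  have /andP [H1 H2] : pos (skeleton u) && psub (skeleton u).
    apply: (pos_from (a := [:: 0]) (s := [::])) => // a' c' s' H.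
    apply: (HF a' c' s'); first by right; apply: List.in_or_app; left.
    by apply/eqP => E; have := sfx_size (subs2_suffix H); rewrite E.
  have /andP [H3 H4] : pos (skeleton v) && psub (skeleton v).
    apply: (pos_from (a := [:: 1]) (s := [::])) => // a' c' s' H.
    apply: (HF a' c' s'); first by right; apply: List.in_or_app; right.
    by apply/eqP => E; have := sfx_size (subs2_suffix H); rewrite E.
  by rewrite H1 H2 H3 H4.
Qed.

Definition nfv (S : ubtree) : nat := leafc S - unaryc S.

Fixpoint build (S : ubtree) (ids : seq nat) : term :=
  match S with
  | Leaf => Var (head 0 ids)
  | Unary S' => Lam (build S' (map succn ids ++ [:: 0]))
  | Binary l r => App (build l (take (nfv l) ids)) (build r (drop (nfv l) ids))
  end.

Fixpoint wf (S : ubtree) : bool :=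
  match S with
  | Leaf => true
  | Unary S' => pos S' && wf S'
  | Binary l r => [&& unaryc l <= leafc l, unaryc r <= leafc r, wf l & wf r]
  end.

Lemma psub_wf S : psub S -> wf S.
Proof.
elim: S => [//|S IH|l IHl r IHr] /=; first by case/andP=> -> /IH.
case/and4P=> Hl Hr Hl' Hr'; by rewrite IHl // IHr // (ltnW Hl) (ltnW Hr). Qed.

Lemma skel_build S ids : skeleton (build S ids) = S.
Proof. by elim: S ids => [//|S IH|l IHl r IHr] ids /=; rewrite ?IH ?IHl ?IHr. Qed.

Lemma filter_map_succ (ids : seq nat) :
  [seq i.-1 | i <- map succn ids ++ [:: 0] & i != 0] = ids.
Proof. by elim: ids => [//|x ids IH] /=; rewrite IH. Qed.

Lemma fv_build S ids : wf S -> size ids = nfv S -> fv_seq (build S ids) = ids.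
Proof.
elim: S ids => [|S IH|l IHl r IHr] ids /=.
- by case: ids => [|x [|y ids]].
- case/andP=> Hp Hw Hs; rewrite IH //; first exact: filter_map_succ.
  rewrite size_cat size_map Hs /nfv /=; move: Hp; rewrite /pos; lia.
- case/and4P=> Hl Hr Hwl Hwr Hs.
  rewrite IHl ?IHr ?cat_take_drop //.
    rewrite size_drop Hs /nfv /=; lia.
  rewrite size_take Hs /nfv /=.
  case: ltnP => //; lia.
Qed.

Definition linpl (b : term) : bool := linb b && (last 1 (fv_seq b) == 0).

Lemma lams_build S ids : wf S -> size ids = nfv S -> all_lams linpl (build S ids).
Proof.
elim: S ids => [|S IH|l IHl r IHr] ids //=.
- case/andP=> Hp Hw Hs.
  have Hs' : size (map succn ids ++ [:: 0]) = nfv S.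
    rewrite size_cat size_map Hs /nfv /=; move: Hp; rewrite /pos; lia.
  rewrite IH // andbT /linpl /linb fv_build //.
  rewrite count_cat /= last_cat /= addn0 addn1 eqSS eqxx andbT.
  by apply/eqP/count_memPn/mapP => -[x _].
- case/and4P=> Hl Hr Hwl Hwr Hs.
  rewrite IHl ?IHr //.
    rewrite size_drop Hs /nfv /=; lia.
  rewrite size_take Hs /nfv /=.
  case: ltnP => //; lia.
Qed.

Lemma all_lams_mono (P Q : term -> bool) t : (forall b, P b -> Q b) -> all_lams P t -> all_lams Q t.
Proof.
move=> H; elim: t => [//|b IH|u IHu v IHv] /=.
- by case/andP=> /H -> /IH.
- by case/andP=> /IHu -> /IHv.
Qed.

Lemma sub_posall t p stk a c s : List.In (a, c, s) (subs2 t p stk) ->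
  pos (skeleton t) && psub (skeleton t) -> pos (skeleton c) && psub (skeleton c).
Proof.
elim: t p stk => [i|b IH|u IHu v IHv] p stk /=.
- by case=> [[_ <- _]|[]].
- case=> [[_ <- _]//|H] /andP [_ /andP [H1 H2]]; apply: IH H _; by rewrite H1 H2.
- case=> [[_ <- _]//|H] /andP [_ /and4P [H1 H2 H3 H4]].
  case: (List.in_app_or _ _ _ H) => H0.
  + by apply: IHu H0 _; rewrite H1 H3.
  + by apply: IHv H0 _; rewrite H2 H4.
Qed.

Lemma good_S2 S : good S -> S2 (leafc S) S.
Proof.
case/and3P=> /eqP Hlu Hn Hp.
have Hwf : wf S by apply: psub_wf.
have Hsz : size ([::] : seq nat) = nfv S by rewrite /nfv Hlu subnn.
set t := build S [::].
have Hfv : fv_seq t = [::] by rewrite /t fv_build.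
have Hl := lams_build Hwf Hsz.
exists t; split.
  rewrite /linear_term /closed_term Hfv eqxx /=.
  by apply: (all_lams_mono _ Hl) => b /andP [].
split; first by rewrite normal_nrm /t skel_build.
split; first by apply: (all_lams_mono _ Hl) => b /andP [].
split; last by rewrite atoms_leafc /t skel_build.
apply: tc_of_fv => // a c s Hin Ha.
have Hlc : all_lams linb c.
  apply: (all_lams_sub Hin); by apply: (all_lams_mono _ Hl) => b /andP [].
have Hps : psub (skeleton t) by rewrite /t skel_build.
have Hpc : pos (skeleton c).
  case: t Hin Hps {Hfv Hl Hlc} => [i|b|u v] /=.
  - by case=> [[E _ _]|[]]; rewrite -E eqxx in Ha.
  - case=> [[E _ _]|H] Hps; first by rewrite -E eqxx in Ha.
    by case/andP: (sub_posall H Hps).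
  - case=> [[E _ _]|H]; first by rewrite -E eqxx in Ha.
    case/and4P=> H1 H2 H3 H4.
    case: (List.in_app_or _ _ _ H) => H0.
    + by case/andP: (sub_posall H0 (introT andP (conj H1 H3))).
    + by case/andP: (sub_posall H0 (introT andP (conj H2 H4))).
have := fv_size Hlc; move: Hpc; rewrite /pos -size_eq0 => Hpc Hs.
by apply/negP => /eqP Hz; move: Hpc => /=; rewrite -Hs Hz add0n ltnn.
Qed.


Import GRing.Theory Num.Theory.

Fixpoint unaries (k : nat) (X : ubtree) : ubtree :=
  if k is k'.+1 then Unary (unaries k' X) else X.

Fixpoint ucount (R : ubtree) : nat := if R is Unary R' then (ucount R').+1 else 0.

Lemma strip_unaries k X : strip_unary (unaries k X) = strip_unary X.
Proof. by elim: k. Qed.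
Lemma kids_unaries k X : psi_kids (unaries k X) = psi_kids X.
Proof. by elim: k. Qed.
Lemma leafc_unaries k X : leafc (unaries k X) = leafc X.
Proof. by elim: k. Qed.
Lemma unaryc_unaries k X : unaryc (unaries k X) = k + unaryc X.
Proof. by elim: k => //= k ->. Qed.
Lemma nrm_unaries k X : nrm (unaries k X) = nrm X.
Proof. by elim: k. Qed.
Lemma unaries_strip R : unaries (ucount R) (strip_unary R) = R.
Proof. by elim: R => //= R ->. Qed.
Lemma kids_strip R : psi_kids R = psi_kids (strip_unary R).
Proof. by elim: R. Qed.
Lemma leafc_strip R : leafc (strip_unary R) = leafc R.
Proof. by elim: R. Qed.
Lemma unaryc_strip R : (unaryc R = ucount R + unaryc (strip_unary R))%N.
Proof. by elim: R => //= R ->. Qed.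

Lemma lu_strip R : lu R = (lu (strip_unary R) - Posz (ucount R))%R.
Proof. rewrite /lu leafc_strip unaryc_strip; lia. Qed.

Lemma sum_labels_cons c cs : sum_labels (c :: cs) = (label c + sum_labels cs)%R.
Proof. by rewrite /sum_labels big_cons. Qed.

Lemma sum_kids R : nrm R -> sum_labels (psi_kids R) = (lu (strip_unary R) - 1)%R.
Proof.
elim: R => [|R IH|l IHl r IHr] /=.
- by rewrite /sum_labels big_nil /lu.
- exact: IH.
- case/and3P=> Hl Hnl Hnr; rewrite sum_labels_cons /=.
  case: l Hl Hnl IHl => [_ _ _|//|l1 l2 _ Hnl IHl].
  + by rewrite /sum_labels big_nil /lu /=; lia.
  + rewrite (IHl Hnl) /lu /=; lia.
Qed.

Lemma lnodes_kids R : nrm R -> sumn (map lnodes (psi_kids R)) = (leafc R).-1.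
Proof.
elim: R => [|R IH|l IHl r IHr] //=.
case/and3P=> Hl Hnl Hnr.
have Hr : (0 < leafc r)%N by elim: (r) => //= a Ha b Hb; lia.
case: l Hl Hnl IHl => [_ _ _|//|l1 l2 _ Hnl IHl] /=.
- rewrite (IHr Hnr) addn0; lia.
- have := IHl Hnl; rewrite /= (IHr Hnr) => ->.
  have H1 : (0 < leafc l1)%N by elim: (l1) => //= a Ha b Hb; lia.
  lia.
Qed.

Fixpoint rt (T : ltree) : ubtree :=
  let: LNode l cs := T in
  unaries (absz (1 + sum_labels cs - l)%R)
    ((fix sp (cs : seq ltree) : ubtree :=
        match cs with [::] => Leaf | c :: cs' => Binary (sp cs') (rt c) end) cs).

Fixpoint spf (cs : seq ltree) : ubtree :=
  match cs with [::] => Leaf | c :: cs' => Binary (spf cs') (rt c) end.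

Lemma rtE l cs : rt (LNode l cs) = unaries (absz (1 + sum_labels cs - l)%R) (spf cs).
Proof. by []. Qed.

Definition phi_root (T : ltree) : ubtree :=
  let: LNode l cs := T in unaries (absz l) (spf cs).

Lemma rt_node R : nrm R -> strip_unary R = spf (psi_kids R) ->
  rt (LNode (lu R) (psi_kids R)) = R.
Proof.
move=> Hn Hs; rewrite rtE -Hs.
have -> : (1 + sum_labels (psi_kids R) - lu R)%R = Posz (ucount R).
  rewrite (sum_kids Hn) (lu_strip R); lia.
exact: unaries_strip.
Qed.

Lemma spf_cons c cs : spf (c :: cs) = Binary (spf cs) (rt c).
Proof. by []. Qed.

Lemma kids_bin l r : psi_kids (Binary l r) =
  LNode (lu r) (psi_kids r) :: (if l is Binary _ _ then psi_kids l else [::]).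
Proof. by []. Qed.

Lemma strip_spf R : nrm R -> strip_unary R = spf (psi_kids R).
Proof.
elim: R => [|R IH|l IHl r IHr] //.
case/and3P=> Hl Hnl Hnr.
rewrite kids_bin spf_cons (rt_node Hnr (IHr Hnr)).
case: l Hl Hnl IHl => [_ _ _ //|//|l1 l2 _ Hnl IHl].
by rewrite -(IHl Hnl).
Qed.

Lemma phi_psi S : good S -> phi_root (psi S) = S.
Proof.
case/and3P=> /eqP Hlu Hn _; rewrite /psi /= -(strip_spf Hn).
have -> : absz (lu (strip_unary S)) = ucount S.
  have := lu_strip S; rewrite {1}/lu Hlu; lia.
exact: unaries_strip.
Qed.


Import GRing.Theory Num.Theory.

Definition nz (l : int) : bool := l != 0%R.

Lemma pos_lu R : pos R -> (1 <= lu R)%R.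
Proof. rewrite /pos /lu; lia. Qed.

Lemma all_cons' (T : Type) (p : pred T) x s : all p (x :: s) = p x && all p s.
Proof. by []. Qed.

Lemma ge1_nz (x : int) : (1 <= x)%R -> x != 0%R.
Proof. lia. Qed.
Lemma ge1_ge0 (x : int) : (1 <= x)%R -> (0 <= x)%R.
Proof. lia. Qed.
Lemma leaf1 (x y : int) (k : nat) : 0%R = (y - 1)%R -> x = (y - Posz k)%R -> (1 <= x)%R -> x == 1%R.
Proof. lia. Qed.
Lemma le_kid (x y : int) (k : nat) : x = (y - Posz k)%R -> (x <= 1 + (y - 1))%R.
Proof. lia. Qed.

Lemma kids_ok R : nrm R -> psub R ->
  all nonroot_ok (psi_kids R) && all (all_labels nz) (psi_kids R).
Proof.
elim: R => [|R IH|l IHl r IHr] //.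
- by move=> Hn /andP [_ Hs]; apply: IH.
- case/and3P=> Hl Hnl Hnr /and4P [Hpl Hpr Hsl Hsr].
  have /andP [Hr1 Hr2] := IHr Hnr Hsr.
  have Hlr := pos_lu Hpr.
  have Hsum := sum_kids Hnr.
  have Hls := lu_strip r.
  have Hnode : nonroot_ok (LNode (lu r) (psi_kids r)) && all_labels nz (LNode (lu r) (psi_kids r)).
    rewrite /= Hr1 Hr2 /nz !andbT.
    apply/andP; split; last exact: ge1_nz.
    apply/and3P; split.
    + case E: (psi_kids r) => [|//] /=.
      move: Hsum; rewrite E /sum_labels big_nil => Hs.
      apply/orP; right; exact: leaf1 Hs Hls Hlr.
    + exact: ge1_ge0.
    + rewrite Hsum; exact: le_kid Hls.
  case/andP: Hnode => Hn1 Hn2.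
  have /andP [Hrest1 Hrest2] : all nonroot_ok (if l is Binary _ _ then psi_kids l else [::]) &&
      all (all_labels nz) (if l is Binary _ _ then psi_kids l else [::]).
    case: l Hl Hnl Hpl Hsl IHl => [//|//|l1 l2 _ Hnl Hpl Hsl IHl].
    exact: IHl Hnl Hsl.
  by rewrite kids_bin !all_cons' Hn1 Hn2 Hrest1 Hrest2.
Qed.

Lemma sum_ge0 cs : all nonroot_ok cs -> (0 <= sum_labels cs)%R.
Proof.
elim: cs => [|[l ks] cs IH] /=; first by rewrite /sum_labels big_nil.
case/andP=> /and4P [_ H0 _ _] /IH Hcs; rewrite sum_labels_cons /=; lia.
Qed.

Lemma root_leaf (y : int) : 0%R = (y - 1)%R -> (y == 0%R) || (y == 1%R).
Proof. lia. Qed.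
Lemma root_eq (y : int) : y == (1 + (y - 1))%R.
Proof. apply/eqP; lia. Qed.
Lemma root_nz (y s : int) : s = (y - 1)%R -> (0 <= s)%R -> y != 0%R.
Proof. lia. Qed.

Lemma Vplus_psi S : good S -> Vplus (leafc S).-1 (psi S).
Proof.
move=> Hg; have /and3P [/eqP Hlu Hn Hp] := Hg.
have /andP [Hk1 Hk2] := kids_ok Hn Hp.
have Hsum := sum_kids Hn.
have H0 := sum_ge0 Hk1.
split.
- rewrite /vtree /psi Hk1 andbT; apply/andP; split.
  + rewrite /leaf_ok; case E: (psi_kids S) => [|//] /=.
    move: Hsum; rewrite E /sum_labels big_nil; exact: root_leaf.
  + rewrite Hsum; exact: root_eq.
- by rewrite /lsize /psi /= (lnodes_kids Hn).
- rewrite /psi /= Hk2 andbT; exact: root_nz Hsum H0.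
Qed.


Import GRing.Theory Num.Theory.

Definition lt_ind (P : ltree -> Prop)
  (H : forall l cs, (forall c, List.In c cs -> P c) -> P (LNode l cs)) : forall T, P T :=
  fix F T := let: LNode l cs := T in
    H l cs ((fix G (cs : seq ltree) : forall c, List.In c cs -> P c :=
      match cs with
      | [::] => fun c Hc => False_ind _ Hc
      | c0 :: cs' => fun c Hc =>
          match Hc with
          | or_introl E => eq_ind c0 P (F c0) c E
          | or_intror H' => G cs' c H'
          end
      end) cs).

Definition notU (X : ubtree) : bool := if X is Unary _ then false else true.

Definition rt_spec (c : ltree) : Prop :=
  [/\ psi_kids (rt c) = kids c, lu (rt c) = label c, nrm (rt c),
      pos (rt c) && psub (rt c) & leafc (rt c) = lnodes c].

Definition spf_spec (cs : seq ltree) : Prop :=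
  [/\ psi_kids (spf cs) = cs, lu (spf cs) = (1 + sum_labels cs)%R, nrm (spf cs) && notU (spf cs),
      pos (spf cs) && psub (spf cs) & leafc (spf cs) = (sumn (map lnodes cs)).+1].

Lemma lu_unaries k X : lu (unaries k X) = (lu X - Posz k)%R.
Proof. rewrite /lu leafc_unaries unaryc_unaries; lia. Qed.

Lemma posall_unaries j X : pos X && psub X -> (j + unaryc X < leafc X)%N ->
  pos (unaries j X) && psub (unaries j X).
Proof.
move=> HX; elim: j => [//|j IH] H.
change (pos (Unary (unaries j X)) && (pos (unaries j X) && psub (unaries j X))).
have H' : (j + unaryc X < leafc X)%N by lia.
rewrite IH // andbT /pos /= unaryc_unaries leafc_unaries; lia.
Qed.

Lemma pos_of_lu X : (1 <= lu X)%R -> pos X.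
Proof. rewrite /pos /lu; lia. Qed.

Lemma spf_nil : spf_spec [::].
Proof. by split => //; rewrite /sum_labels big_nil. Qed.

Lemma lu_bin l r : lu (Binary l r) = (lu l + lu r)%R.
Proof. rewrite /lu /=; lia. Qed.

Lemma int_a1 (a b c : int) : a = (1 + b)%R -> (a + c = 1 + (c + b))%R.
Proof. lia. Qed.
Lemma int_a2 (a b c : int) : a = (1 + b)%R -> (0 <= b)%R -> (0 <= c)%R -> (1 <= a + c)%R.
Proof. lia. Qed.
Lemma int_a3 (a b : int) : a = (1 + b)%R -> (0 <= b)%R -> (1 <= a)%R.
Proof. lia. Qed.

Lemma spf_step c cs : nonroot_ok c -> all nonroot_ok cs -> rt_spec c -> spf_spec cs ->
  spf_spec (c :: cs).
Proof.
move=> Hc Hcs [Rk Rl Rn Rp Rf] [Sk Sl /andP [Sn SU] Sp Sf].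
have Hc0 : (0 <= label c)%R by case: c Hc {Rk Rl Rn Rp Rf} => l ks /and4P [].
have Hs0 := sum_ge0 Hcs.
split.
- rewrite spf_cons kids_bin Rl Rk Sk.
  have -> : (if spf cs is Binary _ _ then cs else [::]) = cs.
    by case: (spf cs) Sk SU => [<-|//|//].
  by case: c {Hc Hc0 Rk Rl Rn Rp Rf}.
- rewrite spf_cons lu_bin Sl Rl sum_labels_cons; exact: int_a1.
- by rewrite spf_cons /= Sn Rn andbT; case: (spf cs) SU.
- rewrite spf_cons /= -/(pos (spf cs)) -/(pos (rt c)).
  case/andP: Sp => -> ->; case/andP: Rp => -> ->; rewrite !andbT.
  apply: pos_of_lu; rewrite lu_bin Rl; exact: int_a2 Sl Hs0 Hc0.
- rewrite spf_cons /= Sf Rf; lia.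
Qed.

Lemma int_b1 (l s : int) : (l <= 1 + s)%R -> (0 <= 1 + s - l)%R.
Proof. lia. Qed.
Lemma int_b2 (l s : int) (j : nat) : (0 <= 1 + s - l)%R -> Posz j = (1 + s - l)%R ->
  (1 + s - Posz j = l)%R.
Proof. lia. Qed.
Lemma int_b3 (l s : int) (j u f : nat) : Posz j = (1 + s - l)%R -> (0 <= l)%R -> l != 0%R ->
  (Posz f - Posz u = 1 + s)%R -> (j + u < f)%N.
Proof. lia. Qed.

Lemma rt_all : forall T, (nonroot_ok T -> all_labels nz T -> rt_spec T) /\
  (all nonroot_ok (kids T) -> all (all_labels nz) (kids T) -> spf_spec (kids T)).
Proof.
apply: lt_ind => l cs IH.
have HF : all nonroot_ok cs -> all (all_labels nz) cs -> spf_spec cs.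
  elim: cs IH => [|c cs IHcs] IH; first by move=> _ _; exact: spf_nil.
  rewrite !all_cons' => /andP [Hc Hcs] /andP [Hzc Hzcs].
  apply: spf_step => //.
    by have [H _] := IH c (or_introl erefl); apply: H.
  by apply: IHcs => // c' Hc'; apply: IH; right.
split; last exact: HF.
move=> /= /and4P [Hleaf H0 Hle Hcs] /andP [Hnz Hzcs].
have [Sk Sl /andP [Sn SU] Sp Sf] := HF Hcs Hzcs.
have Hj0 := int_b1 Hle.
set j := absz (1 + sum_labels cs - l)%R.
have Hj : Posz j = (1 + sum_labels cs - l)%R by rewrite /j gez0_abs.
split; rewrite rtE -/j.
- by rewrite kids_unaries.
- rewrite lu_unaries Sl; exact: int_b2.
- by rewrite nrm_unaries.
- apply: posall_unaries => //.
  apply: int_b3 Hj H0 Hnz _; rewrite -Sl /lu //.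
- by rewrite leafc_unaries Sf.
Qed.


Import GRing.Theory Num.Theory.

Lemma strip_notU X : notU X -> strip_unary X = X.
Proof. by case: X. Qed.

Lemma int_c1 (k : nat) (f u : nat) (l s : int) : l = (1 + s)%R -> (0 <= s)%R -> Posz k = l ->
  (Posz f - Posz u = 1 + s)%R -> f = (k + u)%N.
Proof. lia. Qed.
Lemma int_c2 (k : nat) (l s : int) : l = (1 + s)%R -> (0 <= s)%R -> Posz k = l -> (0 < k)%N.
Proof. lia. Qed.
Lemma int_c3 (k : nat) (f u : nat) (l s : int) : l = (1 + s)%R -> Posz k.+1 = l ->
  (Posz f - Posz u = 1 + s)%R -> (k + u < f)%N.
Proof. lia. Qed.

Lemma surj m T : Vplus m T ->
  [/\ good (phi_root T), leafc (phi_root T) = m.+1 & psi (phi_root T) = T].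
Proof.
case: T => l cs [/= /and3P [_ /eqP Hl Hcs] Hsz /andP [Hnz Hzcs]].
have [_ HF] := rt_all (LNode l cs).
have [Sk Sl /andP [Sn SU] Sp Sf] := HF Hcs Hzcs.
have Hs0 := sum_ge0 Hcs.
have Hl0 : (0 <= l)%R by rewrite Hl; lia.
set k := absz l.
have Hk : Posz k = l by rewrite /k gez0_abs.
have Hflu : (Posz (leafc (spf cs)) - Posz (unaryc (spf cs)) = 1 + sum_labels cs)%R by rewrite -Sl.
split.
- rewrite /good /phi_root -/k leafc_unaries unaryc_unaries nrm_unaries Sn.
  rewrite (int_c1 Hl Hs0 Hk Hflu) eqxx /=.
  have := int_c2 Hl Hs0 Hk; case: k Hk => [//|k'] Hk _ /=.
  apply: posall_unaries => //.
  exact: int_c3 Hl Hk Hflu.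
- rewrite /phi_root leafc_unaries Sf -Hsz /lsize /=; by [].
- rewrite /psi /phi_root strip_unaries kids_unaries (strip_notU SU) Sk Sl -Hl; by [].
Qed.

Theorem proposition11 (n : nat) : 1 <= n ->
  [/\ (forall S, S2 n S -> Vplus n.-1 (psi S)),
      (forall S S', S2 n S -> S2 n S' -> psi S = psi S' -> S = S') &
      (forall T, Vplus n.-1 T -> exists S, S2 n S /\ psi S = T)].
Proof.
move=> Hn; split.
- move=> S /S2_good [Hg Hl]; rewrite -Hl; exact: Vplus_psi.
- move=> S S' /S2_good [Hg _] /S2_good [Hg' _] E.
  by rewrite -(phi_psi Hg) -(phi_psi Hg') E.
- move=> T /surj [Hg Hl Hp]; exists (phi_root T); split => //.
  have := good_S2 Hg; rewrite Hl prednK //.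
Qed.
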